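(* Let $t\ge 2$, let $n_1,\dots,n_t$ be positive integers, and let $G=K_{n_1,\dots,n_t}$ be the complete $t$-partite graph with partite sets $V_1,\dots,V_t$, $|V_i|=n_i$. Let $N_t=\{1,\dots,t\}$ and $f(I)=\sum_{i\in I}n_i$ for $I\subseteq N_t$. Let $p$ be a positive integer with $f(N_t)>p$. Let $D$ be an optimal $\gamma_p(G)$-set, let $\ell=\min\{|D_i|: i\in N_t\setminus I_D\}$, $A=\{i\in N_t\setminus I_D: |D_i|=\ell+1\}$, and $\delta_A=0$ if $A=\emptyset$, $\delta_A=1$ otherwise. Then $\gamma_p(G)\ge p+\ell+\delta_A$.
   Context: A set $S\subseteq V(G)$ is a $p$-dominating set of $G$ if every vertex $v\in V(G)\setminus S$ has at least $p$ neighbors in $S$. The $p$-domination number $\gamma_p(G)$ is the minimum cardinality of a $p$-dominating set of $G$, and a $\gamma_p(G)$-set is a $p$-dominating set of cardinality $\gamma_p(G)$. For $D\subseteq V(G)$ write $D_i=V_i\cap D$ for $i\in N_t$ and $I_D=\{i\in N_t: |D_i|=|V_i|\}$. For a $\gamma_p(G)$-set $D$ with $|I_D|<t$ define $$\mu(D)=\sum_{i\in N_t\setminus I_D}\left|\,|D_i|-\frac{|D|-f(I_D)}{t-|I_D|}\right|.$$ A $\gamma_p(G)$-set $D$ is optimal if: (1) $f(I_D)<p$; (2) $|I_D|\ge |I_S|$ for every $\gamma_p(G)$-set $S$; (3) $\mu(D)\le\mu(S)$ for every $\gamma_p(G)$-set $S$ with $I_S=I_D$. *)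

(* Defs.v *)
From mathcomp Require Import all_boot all_order all_algebra.
Set Implicit Arguments. Unset Strict Implicit. Unset Printing Implicit Defensive.
Import Order.TTheory GRing.Theory Num.Theory.

(* Complete t-partite graph K_{n_1,...,n_t}: partite sets indexed by 'I_t
   (i.e. N_t = {0,...,t-1}); vertex (i, j) with j < n i lies in V_i. *)
Definition Vtx (t : nat) (n : 'I_t -> nat) : finType := {i : 'I_t & 'I_(n i)}.

Section Multipartite.
Variables (t : nat) (n : 'I_t -> nat).
Local Notation V := (Vtx n).

Definition adj (u v : V) : bool := tag u != tag v.

Definition part (i : 'I_t) : {set V} := [set v : V | tag v == i].

Definition p_dominating (p : nat) (S : {set V}) : bool :=
  [forall v, (v \notin S) ==> (p <= #|[set u in S | adj u v]|)].

(* gamma_p(G): minimum cardinality of a p-dominating set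
   (V itself is p-dominating, so #|V| is a safe default) *)
Definition gamma_p (p : nat) : nat :=
  \big[minn/#|V|]_(S : {set V} | p_dominating p S) #|S|.

Definition gamma_set (p : nat) (D : {set V}) : bool :=
  p_dominating p D && (#|D| == gamma_p p).

Definition Dpart (D : {set V}) (i : 'I_t) : {set V} := D :&: part i.
Definition ID (D : {set V}) : {set 'I_t} := [set i | #|Dpart D i| == #|part i|].

Definition fsum (I : {set 'I_t}) : nat := \sum_(i in I) n i.

Definition mu (D : {set V}) : rat :=
  \sum_(i in ~: ID D)
    `| (#|Dpart D i|)%:R
       - ((#|D|%:R - (fsum (ID D))%:R) / (t%:R - (#|ID D|)%:R)) |.

Definition optimal (p : nat) (D : {set V}) : Prop :=
  [/\ gamma_set p D, #|ID D| < t,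
      fsum (ID D) < p,
      (forall S, gamma_set p S -> #|ID S| <= #|ID D|) &
      (forall S, gamma_set p S -> ID S = ID D -> (mu D <= mu S)%R)].

Definition ell (D : {set V}) : nat :=
  \big[minn/#|V|]_(i in ~: ID D) #|Dpart D i|.

Definition Aset (D : {set V}) : {set 'I_t} :=
  [set i in ~: ID D | #|Dpart D i| == (ell D).+1].

End Multipartite.

(* Main.v *)
Require Import Defs.
From mathcomp Require Import all_boot all_order all_algebra.

Lemma key {t : nat} {n : 'I_t -> nat} {p : nat} {D : {set Vtx n}} {i} :
  p_dominating p D -> i \in ~: ID D -> p + #|Dpart D i| <= #|D|.
Proof.
move=> /forallP Hd; rewrite inE inE => Hi.
have sub : Dpart D i \subset part n i by rewrite /Dpart subsetIr.
have : exists v, (v \in part n i) && (v \notin D).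
  apply/existsP; apply: contraR Hi; rewrite negb_exists => /forallP H.
  rewrite eqn_leq subset_leq_card //=; apply: subset_leq_card.
  apply/subsetP => v vi; have := H v; rewrite vi /= negbK => vD.
  by rewrite /Dpart inE vD.
case=> v /andP [vi vD].
have := Hd v; rewrite vD /= => Hp.
rewrite -(cardsID (part n i) D) /Dpart addnC leq_add2l.
apply: (leq_trans Hp); apply: subset_leq_card; apply/subsetP => u.
rewrite !inE => /andP [uD /negP auv]; rewrite uD andbT.
move: vi; rewrite inE => /eqP vi; apply/negP => /eqP ui; apply: auv.
by rewrite /adj ui vi eqxx.
Qed.

Lemma bigmin_le (I : eqType) (s : seq I) (F : I -> nat) x i :
  i \in s -> \big[minn/x]_(j <- s) F j <= F i.
Proof.
elim: s => // a s IH; rewrite inE big_cons => /orP [/eqP -> | Hs].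
  exact: geq_minl.
by apply: leq_trans _ (IH Hs); exact: geq_minr.
Qed.

Lemma ell_le {t : nat} {n : 'I_t -> nat} {D : {set Vtx n}} {i} :
  i \in ~: ID D -> ell D <= #|Dpart D i|.
Proof.
move=> Hi; rewrite /ell -big_filter; apply: bigmin_le.
by rewrite mem_filter Hi mem_index_enum.
Qed.

Theorem lemma6 (t : nat) (n : 'I_t -> nat) (p : nat) (D : {set Vtx n}) :
  2 <= t ->
  (forall i, 0 < n i) ->
  0 < p ->
  p < fsum n [set: 'I_t] ->
  optimal p D ->
  p + ell D + (Aset D != set0) <= gamma_p n p.
Proof.
move=> _ _ _ _ [/andP [Hd /eqP <-] Hlt _ _ _].
case: (set_0Vmem (Aset D)) => [-> | [j Hj]].
  rewrite eqxx /= addn0.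
  have : exists i, i \in ~: ID D.
    apply/set0Pn; apply: contraTneq Hlt => H.
    by rewrite -[ID D]setCK H setC0 cardsT card_ord ltnn.
  case=> i Hi; apply: leq_trans _ (key Hd Hi); by rewrite leq_add2l ell_le.
have -> : (Aset D != set0) by apply/set0Pn; exists j.
move: Hj; rewrite inE => /andP [Hj /eqP Ej].
by have := key Hd Hj; rewrite Ej addn1 addnS.
Qed.
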